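(* Let $V\sim\mathrm{Exp}(\lambda)$ with rate $\lambda>0$. For $p_0\ge 0$, $r\in[0,1]$, define $$R(p_0,r)=\mathbb{E}\big[(p_0+rV)\,\mathbb{1}_{\{(1-r)V\ge p_0\}}\big]+p_0\,\Pr\big[(1-r)V<p_0\le V\big].$$ Let $u_c^*=\sup_{p_0\ge0,\,r\in[0,1]}R(p_0,r)$ and $u_{c,r=0}^*=\sup_{p_0\ge 0}p_0\Pr[V>p_0]$. Then $u_c^*=\mathbb{E}[V]=1/\lambda$, $u_{c,r=0}^*=\frac{1}{e\lambda}$, hence $\Delta:=u_c^*-u_{c,r=0}^*=\frac{1}{\lambda}\big(1-\frac1e\big)$, and the relative increase $\mathcal{I}:=\Delta/u_{c,r=0}^*$ equals $e-1\approx 1.72$ for all $\lambda\in(1,\infty)$.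
   Context: $R(p_0,r)$ is the creator's expected revenue when a speculator who observes the realized valuation $v$ buys at price $p_0$ iff $(1-r)v\ge p_0$ and resells at $v$ paying royalty $rv$, and otherwise the creator sells directly to the end-buyer at $p_0$ iff $v\ge p_0$. *)

(* Defs.v *)
From HB Require Import structures.
From mathcomp Require Import all_boot all_order all_algebra.
From mathcomp Require Import all_classical all_reals all_analysis.
Set Implicit Arguments. Unset Strict Implicit. Unset Printing Implicit Defensive.
Import Order.TTheory GRing.Theory Num.Theory.
Local Open Scope classical_set_scope.
Local Open Scope ring_scope.
Local Open Scope ereal_scope.

(* V ~ Exp(lam): law given by the library's density [exponential_pdf lam]
   (lam * exp(-lam v) on [0,+oo[, 0 elsewhere) and probability
   [exponential_prob lam A = \int_A exponential_pdf lam]. *)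

Definition expV {R : realType} (lam : R) : \bar R :=
  \int[lebesgue_measure]_(v in [set: R]) (v * exponential_pdf lam v)%:E.

Definition creator_rev {R : realType} (lam p0 r : R) : \bar R :=
  \int[lebesgue_measure]_(v in [set: R])
     ((p0 + r * v) * (\1_[set w : R | p0 <= (1 - r) * w] v)
        * exponential_pdf lam v)%:E
  + p0%:E * exponential_prob lam [set v : R | ((1 - r) * v < p0) && (p0 <= v)]%R.

Definition u_c {R : realType} (lam : R) : \bar R :=
  ereal_sup [set z | exists p0 r : R,
     [/\ (0 <= p0)%R, (0 <= r <= 1)%R & z = creator_rev lam p0 r]].

Definition u_c_r0 {R : realType} (lam : R) : \bar R :=
  ereal_sup ((fun p0 : R => p0%:E * exponential_prob lam [set v : R | p0 < v]%R)
             @` [set p : R | 0 <= p]%R).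

(* Main.v *)
Require Import Defs.
From HB Require Import structures.
From mathcomp Require Import all_boot all_order all_algebra.
From mathcomp Require Import all_classical all_reals all_analysis.
From mathcomp Require Import ring lra measurable_realfun.
Import Order.TTheory GRing.Theory Num.Theory.
Import numFieldTopology.Exports.
Local Open Scope classical_set_scope.
Local Open Scope ring_scope.

Section S.
Context {R : realType}.
Variable lam : R.
Hypothesis hlam : 0 < lam.

Let E (x : R) := expR (- lam * x).
Let F (x : R) := - ((x + lam^-1) * expR (- lam * x)).
Let f (x : R) := x * (lam * expR (- lam * x)).

Lemma isdE (x : R) : is_derive x (1:R) (fun y : R => expR (- lam * y)) (- lam * expR (- lam * x)).
Proof.
have h1 : is_derive x (1:R) (fun y : R => - lam * y) (- lam).
  have e : (fun y : R => - lam * y) = (cst (-lam)) * (@id R) by apply/funext.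
  rewrite e; apply: is_derive_eq.
  by rewrite scaler0 addr0 /GRing.scale /= mulr1.
have h2 := @is_derive1_comp R expR (fun y => - lam * y) x _ _ (is_derive_expR _) h1.
by apply: is_derive_eq; rewrite mulrC.
Qed.

Lemma isdF (x : R) : is_derive x (1:R) F (f x).
Proof.
have e : F = - ((fun y => y + lam^-1) * (fun y : R => expR (- lam * y))).
  by apply/funext.
have hE := isdE x.
have hD : is_derive x (1:R) (fun y : R => y + lam^-1) 1.
  by apply: is_derive_eq; rewrite addr0.
rewrite e; apply: is_derive_eq.
rewrite /f /GRing.scale /=.
by field; rewrite gt_eqF.
Qed.

Lemma limG : (fun x => (x + lam^-1) * expR (- lam * x)) x @[x --> +oo] --> 0.
Proof.
apply/cvgr0Pnorm_le => e e0.
pose li := lam^-1.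
have lli : lam * li = 1 by rewrite /li mulfV ?gt_eqF.
have li0 : 0 < li by rewrite /li invr_gt0.
pose M := li + 4 * (li * li) / e.
exists M; split; first exact: num_real.
move=> x hx.
have hM : 0 <= 4 * (li * li) / e by rewrite divr_ge0 // ?mulr_ge0 // ltW.
have x0 : 0 < x by rewrite (lt_trans _ hx) // /M ltr_wpDr.
have a0 : 0 <= lam * x by rewrite mulr_ge0 // ltW.
have hX := expR_ge1Dxn 1 a0.
set X := expR (lam * x) in hX.
have X0 : 0 < X by rewrite expR_gt0.
rewrite mulNr expRN -/X ger0_norm; last by rewrite mulr_ge0 ?invr_ge0 ?ltW // addr_gt0.
rewrite ler_pdivrMr //.
have h1 : x + li <= 2 * x by rewrite /M in hx; lra.
have h2 : 4 <= e * (lam * lam * x).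
  have : 4 * (li * li) / e <= x by rewrite /M in hx; lra.
  rewrite ler_pdivrMr // => h.
  have : 4 * (li * li) * (lam * lam) <= x * e * (lam * lam).
    by rewrite ler_wpM2r // mulr_ge0 // ltW.
  have -> : 4 * (li * li) * (lam * lam) = 4 * ((lam * li) * (lam * li)) by ring.
  rewrite lli; lra.
have h3 : 2 * x <= e * ((lam * x) ^+ 2 / 2).
  have : 4 * x <= e * (lam * lam * x) * x by rewrite ler_wpM2r // ltW.
  have -> : e * ((lam * x) ^+ 2 / 2) = (e * (lam * lam * x) * x) / 2 by field.
  lra.
have h4 : e * ((lam * x) ^+ 2 / 2) <= e * X.
  rewrite ler_wpM2l ?ltW //.
  move: hX; rewrite /= (_ : 2`!%:R = 2 :> R); first lra.
  by rewrite /factorial /= .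
rewrite -/li; exact: (le_trans h1 (le_trans h3 h4)).
Qed.

Lemma pdf_nonneg_mul (v : R) : 0 <= v * exponential_pdf lam v.
Proof.
have [v0|v0] := ltP v 0; first by rewrite lt0_exponential_pdf // mulr0.
by rewrite mulr_ge0 // exponential_pdf_ge0 // ltW.
Qed.

Lemma contE : continuous (fun y : R^o => expR (- lam * y)).
Proof.
move=> z; apply: continuous_comp; last exact: continuous_expR.
by apply: continuousM => //; apply: (@continuousN _ R^o); exact: cst_continuous.
Qed.

Lemma contF : continuous F.
Proof.
move=> x; have hx := isdF x.
have : derivable F x 1 by [].
by move/derivable1_diffP/differentiable_continuous.
Qed.

Lemma expV_val : (\int[lebesgue_measure]_(v in [set: R]) (v * exponential_pdf lam v)%:E = (lam^-1)%:E)%E.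
Proof.
have mf : measurable_fun setT (fun v : R => v * exponential_pdf lam v).
  by apply: measurable_realfun.measurable_funM => //; exact: measurable_exponential_pdf.
rewrite -(setUv `[0, +oo[%classic) ge0_integral_setU//=; last 4 first.
  exact: measurableC.
  by apply/measurable_EFinP; rewrite setUv.
  by move=> x _; rewrite lee_fin pdf_nonneg_mul.
  exact/disj_setPCl.
rewrite [X in (_ + X)%E]integral0_eq ?adde0; last first.
  move=> x x0; rewrite lt0_exponential_pdf ?mulr0 //.
  by move: x0 => /=; rewrite in_itv /= andbT => /negP; rewrite -ltNge.
transitivity (\int[lebesgue_measure]_(x in `[0%R, +oo[) (f x)%:E)%E.
  apply: eq_integral => x; rewrite inE /= in_itv /= andbT => x0.
  by rewrite exponential_pdfE.
have cf : continuous f.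
  move=> z; apply: cvgM; first exact: cvg_id.
  by apply: cvgM; [exact: cvg_cst|exact: contE].
rewrite (@ge0_continuous_FTC2y _ f F 0 0).
- by rewrite /F mulr0 expR0 mulr1 !add0r EFinN oppeK.
- by move=> x x0; rewrite /f mulr_ge0 // mulr_ge0 ?expR_ge0 // ltW.
- exact: continuous_subspaceT.
- by rewrite -oppr0; apply: cvgN; exact: limG.
- by move=> x _; have hx := isdF x.
- by apply: cvg_at_right_filter; exact: contF.
- by move=> x _; have hx := isdF x; rewrite derive1E derive_val.
Qed.

Lemma surv (p : R) : 0 <= p ->
  exponential_prob lam [set v : R | p < v] = (expR (- lam * p))%:E.
Proof.
move=> p0.
have -> : [set v : R | p < v] = `]p, +oo[%classic.
  by apply/seteqP; split => x /=; rewrite in_itv /= andbT.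
rewrite /exponential_prob integral_itv_obnd_cbnd; last first.
  apply/measurable_EFinP; apply: measurable_funS (measurable_exponential_pdf lam) => //.
transitivity (\int[lebesgue_measure]_(x in `[p, +oo[) (lam * expR (- lam * x))%:E)%E.
  apply: eq_integral => x; rewrite inE /= in_itv /= andbT => x0.
  by rewrite exponential_pdfE // (le_trans p0 x0).
have dE x : is_derive x (1:R) (fun y => - expR (- lam * y)) (lam * expR (- lam * x)).
  have h := isdE x.
  by apply: is_derive_eq; rewrite mulNr opprK.
rewrite (@ge0_continuous_FTC2y _ _ (fun y => - expR (- lam * y)) p 0).
- by rewrite EFinN oppeK add0e.
- by move=> x _; rewrite mulr_ge0 ?expR_ge0 // ltW.
- apply: continuous_subspaceT => z.
  by apply: cvgM; [exact: cvg_cst|exact: contE].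
- rewrite -oppr0; apply: cvgN.
  rewrite (_ : (fun x => expR (- lam * x)) =
               (fun z => expR (- z)) \o (fun z => lam * z)); last first.
    by apply: eq_fun => x; rewrite mulNr.
  apply: (@cvg_comp _ _ _ _ _ _ (pinfty_nbhs R)); last exact: cvgr_expR.
  exact: gt0_cvgMry.
- by move=> x _; have hx := dE x.
- by apply: cvg_at_right_filter; apply: cvgN; exact: contE.
- by move=> x _; have hx := dE x; rewrite derive1E derive_val.
Qed.

Lemma mset (P : R -> bool) : measurable_fun setT P -> measurable [set x | P x].
Proof.
move=> mP; have := mP measurableT [set true] I; rewrite setTI.
by congr measurable; apply/seteqP; split => x /=.
Qed.

Lemma mlin (a b : R) : measurable_fun setT (fun x : R => a + b * x).
Proof.
by apply: measurable_funD.
Qed.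

Lemma rev_le (p0 r : R) : 0 <= p0 -> 0 <= r <= 1 ->
  (\int[lebesgue_measure]_(v in [set: R])
     ((p0 + r * v) * (\1_[set w : R | p0 <= (1 - r) * w] v)
        * exponential_pdf lam v)%:E
  + p0%:E * exponential_prob lam [set v : R | ((1 - r) * v < p0) && (p0 <= v)]%R
  <= \int[lebesgue_measure]_(v in [set: R]) (v * exponential_pdf lam v)%:E)%E.
Proof.
move=> p00 /andP[r0 r1].
set B := [set w : R | p0 <= (1 - r) * w].
set A := [set v : R | ((1 - r) * v < p0) && (p0 <= v)].
have mB : measurable B.
  by apply: mset; apply: measurable_fun_ler.
have mA : measurable A.
  apply: mset; apply: measurable_and; [apply: measurable_fun_ltr|apply: measurable_fun_ler] => //.
have mpdf := measurable_exponential_pdf lam.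
have eA : (exponential_prob lam A =
   \int[lebesgue_measure]_(v in [set: R]) ((\1_A v * exponential_pdf lam v)%:E))%E.
  rewrite /exponential_prob integral_mkcond; apply: eq_integral => v _.
  rewrite patchE indicE; case: (v \in A) => /=; first by rewrite mul1r.
  by rewrite mul0r.
have mg1 : measurable_fun setT (fun v => (p0 + r * v) * \1_B v * exponential_pdf lam v).
  exact: (measurable_realfun.measurable_funM
    (measurable_realfun.measurable_funM (mlin p0 r) (@measurable_indic _ _ R setT B mB)) mpdf).
have mg2 : measurable_fun setT (fun v => \1_A v * exponential_pdf lam v).
  exact: (measurable_realfun.measurable_funM (@measurable_indic _ _ R setT A mA) mpdf).
have mh : measurable_fun setT (fun v : R => v * exponential_pdf lam v).
  by apply: measurable_realfun.measurable_funM.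
have pw v : [/\ 0 <= (p0 + r * v) * \1_B v * exponential_pdf lam v,
   0 <= \1_A v * exponential_pdf lam v &
   (p0 + r * v) * \1_B v * exponential_pdf lam v + p0 * (\1_A v * exponential_pdf lam v)
     <= v * exponential_pdf lam v].
  have [v0|v0] := ltP v 0.
    by rewrite lt0_exponential_pdf // !mulr0 addr0.
  have pd := exponential_pdf_ge0 (ltW hlam) v.
  rewrite !indicE.
  have [vB|vB] := boolP (v \in B).
    have vA : v \notin A.
      move: vB; rewrite in_setE /= => h; apply/negP; rewrite in_setE /= => /andP[h1 _].
      by move: h; rewrite /B /= leNgt h1.
    rewrite (negbTE vA) /= mulr1 !mul0r mulr0 addr0.
    move: vB; rewrite in_setE /B /= => h.
    split; first by rewrite mulr_ge0 // addr_ge0 // mulr_ge0.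
      by [].
    by rewrite ler_wpM2r //; lra.
  rewrite /= mulr0 mul0r add0r.
  split => //; first by case: (v \in A); rewrite /= ?mul1r ?mul0r.
  have [vA|vA] := boolP (v \in A).
    move: vA; rewrite in_setE /= => /andP[_ h].
    by rewrite mul1r ler_wpM2r.
  by rewrite /= mul0r mulr0 mulr_ge0.
rewrite eA.
rewrite -ge0_integralZl_EFin //; first last.
- exact/measurable_EFinP.
- by move=> v _; rewrite lee_fin; case: (pw v).
rewrite -ge0_integralD //; first last.
- by apply/measurable_EFinP; apply: measurable_funM => //.
- by move=> v _; rewrite -EFinM lee_fin; case: (pw v) => _ h _; rewrite mulr_ge0.
- exact/measurable_EFinP.
- by move=> v _; rewrite lee_fin; case: (pw v).
apply: ge0_le_integral => //.
- move=> v _; rewrite -EFinM -EFinD lee_fin; case: (pw v) => h1 h2 _.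
  by rewrite addr_ge0 // mulr_ge0.
- apply/measurable_EFinP; apply: measurable_funD => //.
  exact: (measurable_realfun.measurable_funM (measurable_cst p0) mg2).
- exact/measurable_EFinP.
- move=> v _; rewrite -EFinM -EFinD lee_fin.
  by case: (pw v).
Qed.
End S.

Lemma sup_att {R : realType} (S : set (\bar R)) c :
  S c -> (forall z, S z -> (z <= c)%E) -> ereal_sup S = c.
Proof.
move=> Sc ub; apply/eqP; rewrite eq_le; apply/andP; split.
  by apply: ge_ereal_sup => z /ub.
exact: ereal_sup_ubound.
Qed.

Theorem lemma4 (R : realType) (lam : R) (hlam : 0 < lam) :
  [/\ u_c lam = expV lam,
      expV lam = (lam^-1)%:E,
      u_c_r0 lam = ((expR 1 * lam)^-1)%:E,
      fine (u_c lam) - fine (u_c_r0 lam) = lam^-1 * (1 - (expR 1)^-1)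
    & (fine (u_c lam) - fine (u_c_r0 lam)) / fine (u_c_r0 lam) = expR 1 - 1].
Proof.
have eV : expV lam = (lam^-1)%:E by exact: expV_val.
have uc : u_c lam = expV lam.
  rewrite /u_c; apply: sup_att.
    exists 0, 1; split => //; first by rewrite ler01 lexx.
    rewrite /creator_rev /expV mul0e adde0; apply: eq_integral => v _.
    by rewrite add0r mul1r subrr indicE mem_set ?mulr1 //= mul0r.
  move=> z [p0 [r [hp hr ->]]]; exact: rev_le.
have e0 : 0 < expR 1 :> R by exact: expR_gt0.
have ur : u_c_r0 lam = ((expR 1 * lam)^-1)%:E.
  rewrite /u_c_r0; apply: sup_att.
    exists lam^-1; first by rewrite /= invr_ge0 ltW.
    rewrite surv // ?invr_ge0 ?ltW // -EFinM; congr EFin.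
    rewrite mulNr mulfV ?gt_eqF // expRN invfM mulrC //.
  move=> z [p hp <-]; rewrite surv // -EFinM lee_fin.
  have hX := expR_ge1Dx (lam * p - 1).
  rewrite expRB addrC subrK in hX.
  rewrite mulNr expRN.
  set X := expR (lam * p) in hX *.
  have X0 : 0 < X by exact: expR_gt0.
  rewrite ler_pdivrMr // invfM.
  rewrite ler_pdivlMr // in hX.
  rewrite -mulrA ler_pdivlMl //.
  rewrite -(ler_pM2l hlam).
  have -> : lam * (lam^-1 * X) = X by rewrite mulrA mulfV ?gt_eqF // mul1r.
  have -> : lam * (expR 1 * p) = lam * p * expR 1 by ring.
  exact: hX.
split => //.
- rewrite uc eV ur /=; field; rewrite ?gt_eqF //.
- by rewrite uc eV ur /=; field; rewrite !gt_eqF.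
Qed.
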